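(* Let $0<\alpha<1$, $\lambda\in\mathbb{R}$, $\tau>0$, and let $\{v^n\}_{n=0}^{\infty}$ be a real sequence, with the convention $v^{-1}=0$. Then for every integer $n\ge0$, $$v^{n}\delta_{t}^{\alpha,\lambda}v^n \geq \frac{1}{2} e^{ -\frac{\alpha}{2}\lambda\tau}\delta_{t}^{\alpha,2\lambda} (v^n)^2 +\frac{e^{- \frac{\alpha}{2}\lambda\tau}}{2l_0^{\alpha}} \tau^{\alpha}(\delta_{t}^{\alpha,\lambda}v^n)^2,$$ $$v^{n-1}\delta_{t}^{\alpha,\lambda}v^n \geq \frac{1}{2} e^{(1- \frac{\alpha}{2})\lambda\tau} \delta_{t}^{\alpha,2\lambda} (v^n)^2-\frac{e^{(1- \frac{\alpha}{2})\lambda\tau}}{2(l_0^{\alpha}-l_1^{\alpha})}\tau^{\alpha} (\delta_{t}^{\alpha,\lambda}v^n)^2.$$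
   Context: $g_k^{\alpha}=(-1)^k\binom{\alpha}{k}$ are the coefficients of $(1-z)^{\alpha}=\sum_{k\ge0}g_k^{\alpha}z^k$, and for a constant $\mu$, $g_k^{\alpha,\mu}=e^{-(k-\frac{\alpha}{2})\mu\tau}g_k^{\alpha}$. For a sequence $\{w^n\}$, $\delta_t^{\alpha,\mu}w^n=\tau^{-\alpha}\sum_{k=0}^{n}g_k^{\alpha,\mu}w^{n-k}$; in particular $\delta_{t}^{\alpha,2\lambda}(v^n)^2=\tau^{-\alpha}\sum_{k=0}^{n}g_{k}^{\alpha,2\lambda}(v^{n-k})^2$. Also $l_n^{\alpha}=\sum_{k=0}^n g_k^{\alpha}$, so $l_0^{\alpha}=1$ and $l_1^{\alpha}=1-\alpha$. *)

(* Defs.v *)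
From Stdlib Require Import Reals.
Open Scope R_scope.

Fixpoint gbinom (a : R) (k : nat) : R :=
  match k with
  | O => 1
  | S m => gbinom a m * (a - INR m) / (INR m + 1)
  end.

(* g_k^a = (-1)^k binom(a,k) : coefficients of (1-z)^a *)
Definition gcoef (a : R) (k : nat) : R := (-1) ^ k * gbinom a k.

Definition gcoef_mu (a mu tau : R) (k : nat) : R :=
  exp (- (INR k - a / 2) * mu * tau) * gcoef a k.

Definition delta_t (a mu tau : R) (w : nat -> R) (n : nat) : R :=
  Rpower tau (- a) * sum_f_R0 (fun k => gcoef_mu a mu tau k * w (n - k)%nat) n.

Definition lcoef (a : R) (n : nat) : R := sum_f_R0 (gcoef a) n.

Definition vprev (v : nat -> R) (n : nat) : R :=
  match n with O => 0 | S m => v m end.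

(* Main.v *)
Require Import Defs.
From Stdlib Require Import Reals.
From Stdlib Require Import Lra Lia Psatz.
Open Scope R_scope.

Lemma sumS (F : nat -> R) n :
  sum_f_R0 F (S n) = F 0%nat + sum_f_R0 (fun i => F (S i)) n.
Proof.
  induction n as [|n IH]; simpl; [ring|]. simpl in IH. rewrite IH. ring.
Qed.

Lemma sum_scal (c : R) (F : nat -> R) n :
  sum_f_R0 (fun i => c * F i) n = c * sum_f_R0 F n.
Proof. induction n as [|n IH]; simpl; [ring|]. rewrite IH. ring. Qed.

Lemma sum_opp' (F : nat -> R) n :
  sum_f_R0 (fun i => - F i) n = - sum_f_R0 F n.
Proof. induction n as [|n IH]; simpl; [ring|]. rewrite IH. ring. Qed.

Lemma sum_drop0 (F : nat -> R) n :
  sum_f_R0 (fun i => if Nat.eqb i 0 then 0 else F i) n = sum_f_R0 F n - F 0%nat.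
Proof. induction n as [|n IH]; simpl; [ring|]. simpl in IH. rewrite IH. ring. Qed.

Lemma sum_nonneg (F : nat -> R) n :
  (forall i, (i <= n)%nat -> 0 <= F i) -> 0 <= sum_f_R0 F n.
Proof.
  induction n as [|n IH]; intros H; simpl.
  - apply H; lia.
  - assert (0 <= F (S n)) by (apply H; lia).
    assert (0 <= sum_f_R0 F n) by (apply IH; intros; apply H; lia). lra.
Qed.

Lemma quad_aux (Q m a y : R) : 0 <= Q -> 0 <= m -> a * a <= m * Q ->
  0 <= Q + m * y * y - 2 * a * y.
Proof.
  intros HQ Hm H.
  destruct (Req_dec Q 0) as [E|E].
  - subst. assert (a = 0) by (apply Rsqr_0_uniq; unfold Rsqr; apply Rle_antisym; nra). subst. nra.
  - assert (HQp : 0 < Q) by lra.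
    assert (0 <= (m * Q - a * a) * (y * y)) by (apply Rmult_le_pos; [lra | apply Rle_0_sqr]).
    assert (0 <= (Q - a * y) * (Q - a * y)) by apply Rle_0_sqr.
    assert (Q * 0 <= Q * (Q + m * y * y - 2 * a * y)) by nra.
    apply Rmult_le_reg_l with Q; auto.
Qed.

Lemma cs (c y : nat -> R) n : forall K,
  (forall i, (i <= n)%nat -> 0 <= c i) -> sum_f_R0 c n <= K ->
  (sum_f_R0 (fun i => c i * y i) n) ^ 2 <= K * sum_f_R0 (fun i => c i * (y i) ^ 2) n.
Proof.
  induction n as [|n IH]; intros K Hc HK; simpl in *.
  - assert (0 <= c 0%nat) by (apply Hc; lia).
    assert (0 <= ((K - c 0%nat) * c 0%nat) * (y 0%nat * y 0%nat)) by
      (apply Rmult_le_pos; [apply Rmult_le_pos; lra | apply Rle_0_sqr]).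
    nra.
  - set (a := sum_f_R0 (fun i => c i * y i) n).
    set (Q := sum_f_R0 (fun i => c i * (y i * (y i * 1))) n).
    assert (Hcn : 0 <= c (S n)) by (apply Hc; lia).
    assert (HC : 0 <= sum_f_R0 c n) by (apply sum_nonneg; intros; apply Hc; lia).
    assert (IH' : a * (a * 1) <= (K - c (S n)) * Q).
    { apply IH; [intros; apply Hc; lia| lra]. }
    assert (HQ : 0 <= Q).
    { apply sum_nonneg. intros. assert (0 <= c i) by (apply Hc; lia). nra. }
    pose proof (quad_aux Q (K - c (S n)) a (y (S n)) HQ ltac:(lra) ltac:(nra)).
    assert (0 <= c (S n) * (Q + (K - c (S n)) * y (S n) * y (S n) - 2 * a * y (S n))) by nra.
    nra.
Qed.

Lemma gcoefS a k : gcoef a (S k) = gcoef a k * (INR k - a) / (INR k + 1).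
Proof. unfold gcoef. simpl. unfold Rdiv. ring. Qed.

Lemma gcoef0 a : gcoef a 0 = 1.
Proof. unfold gcoef. simpl. ring. Qed.

Lemma gcoef1 a : gcoef a 1 = - a.
Proof. rewrite gcoefS, gcoef0. simpl. field. Qed.

Lemma gcoef_neg a k : 0 < a < 1 -> gcoef a (S k) <= 0.
Proof.
  intros Ha. induction k as [|k IH].
  - rewrite gcoef1. lra.
  - rewrite gcoefS. pose proof (pos_INR k). rewrite S_INR.
    unfold Rdiv. assert (0 < / (INR k + 1 + 1)) by (apply Rinv_0_lt_compat; lra).
    assert (0 <= INR k + 1 - a) by lra.
    assert (gcoef a (S k) * (INR k + 1 - a) <= 0) by nra. nra.
Qed.

Lemma lcoef_eq a n : 0 < a < 1 -> lcoef a n * a = - (INR n + 1) * gcoef a (S n).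
Proof.
  intros Ha. induction n as [|n IH].
  - unfold lcoef. simpl. rewrite gcoef1, gcoef0. ring.
  - unfold lcoef in *.
    change (sum_f_R0 (gcoef a) (S n)) with (sum_f_R0 (gcoef a) n + gcoef a (S n)).
    rewrite Rmult_plus_distr_r, IH.
    rewrite (gcoefS a (S n)). rewrite !S_INR. field.
    pose proof (pos_INR n). lra.
Qed.

Lemma lcoef_nonneg a n : 0 < a < 1 -> 0 <= lcoef a n.
Proof.
  intros Ha. pose proof (lcoef_eq a n Ha). pose proof (gcoef_neg a n Ha).
  pose proof (pos_INR n).
  assert (0 <= lcoef a n * a) by nra. nra.
Qed.

Section Core.
Variable a : R.
Hypothesis Ha : 0 < a < 1.
Variable u : nat -> R.
Definition DD n := sum_f_R0 (fun k => gcoef a k * u (n - k)%nat) n.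
Definition SS n := sum_f_R0 (fun k => gcoef a k * (u (n - k)%nat) ^ 2) n.
Definition pu n := match n with O => 0 | S m => u m end.

Lemma decompD m : DD (S m) = u (S m) - sum_f_R0 (fun i => - gcoef a (S i) * u (m - i)%nat) m.
Proof.
  unfold DD. rewrite sumS, gcoef0. rewrite Nat.sub_0_r.
  assert (E : sum_f_R0 (fun i => - gcoef a (S i) * u (m - i)%nat) m =
     - sum_f_R0 (fun i => gcoef a (S i) * u (S m - S i)%nat) m)
   by (rewrite <- sum_opp'; apply sum_eq; intros; simpl; ring).
  rewrite E. ring.
Qed.

Lemma decompS m : SS (S m) = u (S m) ^ 2 - sum_f_R0 (fun i => - gcoef a (S i) * (u (m - i)%nat) ^ 2) m.
Proof.
  unfold SS. rewrite sumS, gcoef0. rewrite Nat.sub_0_r.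
  assert (E : sum_f_R0 (fun i => - gcoef a (S i) * u (m - i)%nat ^ 2) m =
     - sum_f_R0 (fun i => gcoef a (S i) * u (S m - S i)%nat ^ 2) m)
   by (rewrite <- sum_opp'; apply sum_eq; intros; simpl; ring).
  rewrite E. ring.
Qed.

Lemma csum m : sum_f_R0 (fun i => - gcoef a (S i)) m = 1 - lcoef a (S m).
Proof.
  rewrite sum_opp'. unfold lcoef. rewrite sumS, gcoef0. ring.
Qed.

Lemma core1 n : u n * DD n >= SS n / 2 + DD n ^ 2 / 2.
Proof.
  destruct n as [|m].
  - unfold DD, SS. simpl. rewrite gcoef0. nra.
  - rewrite decompD, decompS.
    pose proof (cs (fun i => - gcoef a (S i)) (fun i => u (m - i)%nat) m 1
      ltac:(intros; pose proof (gcoef_neg a i Ha); lra)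
      ltac:(rewrite csum; pose proof (lcoef_nonneg a (S m) Ha); lra)) as H.
    cbv beta in H.
    set (A := sum_f_R0 (fun i => - gcoef a (S i) * u (m - i)%nat) m) in *.
    set (Q := sum_f_R0 (fun i => - gcoef a (S i) * u (m - i)%nat ^ 2) m) in *.
    nra.
Qed.

Lemma core2 n : 2 * a * pu n * DD n >= a * SS n - DD n ^ 2.
Proof.
  destruct n as [|m].
  - unfold DD, SS. simpl. rewrite gcoef0. nra.
  - simpl pu. rewrite decompD, decompS.
    set (c := fun i => - gcoef a (S i)).
    set (c' := fun i => if Nat.eqb i 0 then 0 else c i).
    set (y := fun i => u (m - i)%nat).
    pose proof (cs c' y m (1 - a)
      ltac:(intros; unfold c', c; destruct (Nat.eqb i 0); [lra|];
            pose proof (gcoef_neg a i Ha); lra)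
      ltac:(unfold c'; rewrite sum_drop0; unfold c; rewrite csum, gcoef1;
            pose proof (lcoef_nonneg a (S m) Ha); lra)) as H.
    assert (E1 : sum_f_R0 (fun i => c' i * y i) m = sum_f_R0 (fun i => c i * y i) m - a * u m).
    { replace (a * u m) with (c 0%nat * y 0%nat)
        by (unfold c, y; rewrite gcoef1, Nat.sub_0_r; ring).
      rewrite <- (sum_drop0 (fun i => c i * y i)). apply sum_eq. intros i _.
      unfold c'. cbv beta. destruct (Nat.eqb i 0); ring. }
    assert (E2 : sum_f_R0 (fun i => c' i * y i ^ 2) m = sum_f_R0 (fun i => c i * y i ^ 2) m - a * u m ^ 2).
    { replace (a * u m ^ 2) with (c 0%nat * y 0%nat ^ 2)
        by (unfold c, y; rewrite gcoef1, Nat.sub_0_r; ring).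
      rewrite <- (sum_drop0 (fun i => c i * y i ^ 2)). apply sum_eq. intros i _.
      unfold c'. cbv beta. destruct (Nat.eqb i 0); ring. }
    rewrite E1, E2 in H.
    assert (HQ : 0 <= sum_f_R0 (fun i => c' i * y i ^ 2) m).
    { apply sum_nonneg. intros i _. unfold c', c. destruct (Nat.eqb i 0); [lra|].
      pose proof (gcoef_neg a i Ha). assert (0 <= y i ^ 2) by nra. nra. }
    rewrite E2 in HQ. unfold c, y in *.
    set (A := sum_f_R0 (fun i => - gcoef a (S i) * u (m - i)%nat) m) in *.
    set (Q := sum_f_R0 (fun i => - gcoef a (S i) * u (m - i)%nat ^ 2) m) in *.
    set (x := u (S m)). set (y0 := u m) in *.
    set (a' := A - a * y0) in *. set (Q' := Q - a * y0 ^ 2) in *.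
    assert (Hid : (1 - a) * (2 * a * y0 * (x - A) - (a * (x ^ 2 - Q) - (x - A) ^ 2))
       = ((1 - a) * x - a') ^ 2 + a * ((1 - a) * Q' - a' ^ 2)) by (unfold a', Q'; ring).
    assert (0 <= ((1 - a) * x - a') ^ 2) by apply pow2_ge_0.
    assert (0 <= a * ((1 - a) * Q' - a' ^ 2)) by (apply Rmult_le_pos; lra).
    assert (0 <= (1 - a) * (2 * a * y0 * (x - A) - (a * (x ^ 2 - Q) - (x - A) ^ 2))) by lra.
    assert (0 < 1 - a) by lra.
    assert (0 <= 2 * a * y0 * (x - A) - (a * (x ^ 2 - Q) - (x - A) ^ 2)).
    { apply Rmult_le_reg_l with (1 - a); lra. }
    lra.
Qed.
End Core.

Lemma Rpower_pos' t a : 0 < Rpower t a.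
Proof. unfold Rpower. apply exp_pos. Qed.

Theorem lemma4p1 (alpha lambda tau : R) (v : nat -> R) :
  0 < alpha < 1 -> 0 < tau ->
  forall n : nat,
    v n * delta_t alpha lambda tau v n >=
      / 2 * exp (- (alpha / 2) * lambda * tau)
          * delta_t alpha (2 * lambda) tau (fun j => (v j) ^ 2) n
      + exp (- (alpha / 2) * lambda * tau) / (2 * lcoef alpha 0)
          * Rpower tau alpha * (delta_t alpha lambda tau v n) ^ 2
    /\
    vprev v n * delta_t alpha lambda tau v n >=
      / 2 * exp ((1 - alpha / 2) * lambda * tau)
          * delta_t alpha (2 * lambda) tau (fun j => (v j) ^ 2) n
      - exp ((1 - alpha / 2) * lambda * tau) / (2 * (lcoef alpha 0 - lcoef alpha 1))
          * Rpower tau alpha * (delta_t alpha lambda tau v n) ^ 2.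
Proof.
  intros Ha Ht n.
  set (r := lambda * tau).
  set (u := fun j => exp (INR j * r) * v j).
  set (e := exp (alpha / 2 * r)).
  set (f := exp (- INR n * r)).
  set (P := Rpower tau alpha).
  assert (Hshift : forall k, (k <= n)%nat -> exp (- INR k * r) * v (n - k)%nat = f * u (n - k)%nat).
  { intros k Hk. unfold f, u. rewrite <- Rmult_assoc, <- exp_plus, minus_INR by auto.
    f_equal. f_equal. ring. }
  assert (HD : delta_t alpha lambda tau v n = / P * (e * f * DD alpha u n)).
  { unfold delta_t, DD, P. rewrite Rpower_Ropp. f_equal.
    rewrite <- !sum_scal. apply sum_eq. intros k Hk. unfold gcoef_mu.
    replace (- (INR k - alpha / 2) * lambda * tau) with (alpha / 2 * r + - INR k * r)
      by (unfold r; ring).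
    rewrite exp_plus. fold e.
    transitivity (e * gcoef alpha k * (f * u (n - k)%nat));
      [rewrite <- (Hshift k Hk); ring | ring]. }
  assert (HS : delta_t alpha (2 * lambda) tau (fun j => v j ^ 2) n
              = / P * (e * e * f * f * SS alpha u n)).
  { unfold delta_t, SS, P. rewrite Rpower_Ropp. f_equal.
    rewrite <- !sum_scal. apply sum_eq. intros k Hk. unfold gcoef_mu.
    replace (- (INR k - alpha / 2) * (2 * lambda) * tau)
      with ((alpha / 2 * r + - INR k * r) + (alpha / 2 * r + - INR k * r))
      by (unfold r; ring).
    rewrite !exp_plus. fold e.
    replace (e * exp (- INR k * r) * (e * exp (- INR k * r)) * gcoef alpha k * v (n - k)%nat ^ 2)
      with (e * e * gcoef alpha k * (exp (- INR k * r) * v (n - k)%nat) ^ 2) by ring.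
    rewrite (Hshift k Hk). cbv beta. ring. }
  assert (Hv : v n = f * u n).
  { unfold f, u. rewrite <- Rmult_assoc, <- exp_plus.
    replace (- INR n * r + INR n * r) with 0 by ring. rewrite exp_0. ring. }
  assert (Hvp : vprev v n = f * exp r * pu u n).
  { destruct n as [|m]; simpl; [ring|].
    unfold f, u. rewrite <- !Rmult_assoc, <- !exp_plus. rewrite S_INR.
    replace (- (INR m + 1) * r + r + INR m * r) with 0 by ring. rewrite exp_0. ring. }
  assert (He1 : exp (- (alpha / 2) * lambda * tau) = / e).
  { unfold e. rewrite <- exp_Ropp. f_equal. unfold r. ring. }
  assert (He2 : exp ((1 - alpha / 2) * lambda * tau) = exp r * / e).
  { unfold e. rewrite <- exp_Ropp, <- exp_plus. f_equal. unfold r. ring. }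
  assert (Hl0 : lcoef alpha 0 = 1) by (unfold lcoef; simpl; apply gcoef0).
  assert (Hl1 : lcoef alpha 0 - lcoef alpha 1 = alpha)
    by (unfold lcoef; simpl; rewrite gcoef0, gcoef1; ring).
  assert (HP : 0 < P) by apply Rpower_pos'.
  assert (Hep : 0 < e) by apply exp_pos.
  assert (Hfp : 0 < f) by apply exp_pos.
  assert (Hrp : 0 < exp r) by apply exp_pos.
  pose proof (core1 alpha Ha u n) as C1.
  pose proof (core2 alpha Ha u n) as C2.
  set (D := DD alpha u n) in *. set (S := SS alpha u n) in *. set (p := pu u n) in *.
  rewrite HD, HS, Hv, Hvp, He1, He2, Hl1, Hl0.
  assert (K : 0 < e * f * f * / P).
  { repeat apply Rmult_lt_0_compat; try lra. apply Rinv_0_lt_compat; lra. }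
  split.
  - assert (Eq : f * u n * (/ P * (e * f * D)) -
      (/ 2 * / e * (/ P * (e * e * f * f * S)) + / e / (2 * 1) * P * (/ P * (e * f * D)) ^ 2)
      = (e * f * f * / P) * (u n * D - (S / 2 + D ^ 2 / 2))) by (field; lra).
    assert (0 <= (e * f * f * / P) * (u n * D - (S / 2 + D ^ 2 / 2))).
    { apply Rmult_le_pos; lra. }
    lra.
  - assert (Eq : f * exp r * p * (/ P * (e * f * D)) -
      (/ 2 * (exp r * / e) * (/ P * (e * e * f * f * S)) -
       exp r * / e / (2 * alpha) * P * (/ P * (e * f * D)) ^ 2)
      = (exp r * (e * f * f * / P) / (2 * alpha)) * (2 * alpha * p * D - (alpha * S - D ^ 2)))
      by (field; lra).
    assert (0 <= (exp r * (e * f * f * / P) / (2 * alpha)) * (2 * alpha * p * D - (alpha * S - D ^ 2))).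
    { apply Rmult_le_pos; [|lra]. unfold Rdiv. apply Rmult_le_pos; [nra|].
      left. apply Rinv_0_lt_compat; lra. }
    lra.
Qed.
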